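(* If $G$ is a finite non-abelian induced regular group, then $G/Z(G)$ is a $p$-group for some prime $p$.
   Context: For a finite group $G$, $C_G(x)$ denotes the centralizer of $x\in G$ and $Z(G)$ the center. The non-centralizer graph $\Upsilon_G$ is the simple graph with vertex set $G$ in which two distinct vertices $x,y$ are adjacent iff $C_G(x)\neq C_G(y)$; the induced non-centralizer graph $\Upsilon_{G\setminus Z(G)}$ is its induced subgraph on $G\setminus Z(G)$. $G$ is called induced regular if $\Upsilon_{G\setminus Z(G)}$ is a regular graph (all vertices have the same degree). *)

(* Defs.v *)
From mathcomp Require Import all_boot all_fingroup all_solvable pgroup center.
Set Implicit Arguments. Unset Strict Implicit. Unset Printing Implicit Defensive.
Local Open Scope group_scope.

Definition nc_adj (gT : finGroupType) (G : {group gT}) (x y : gT) : bool :=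
  (x != y) && ('C_G[x] != 'C_G[y]).

Definition induced_nc_deg (gT : finGroupType) (G : {group gT}) (x : gT) : nat :=
  #|[set y in G :\: 'Z(G) | nc_adj G x y]|.

Definition induced_regular (gT : finGroupType) (G : {group gT}) : Prop :=
  forall x y, x \in G :\: 'Z(G) -> y \in G :\: 'Z(G) ->
    induced_nc_deg G x = induced_nc_deg G y.

(* Main.v *)
Require Import Defs.
From mathcomp Require Import all_boot all_fingroup all_solvable pgroup center.
From mathcomp Require Import zify.
Set Implicit Arguments. Unset Strict Implicit. Unset Printing Implicit Defensive.
Local Open Scope group_scope.

Lemma arith1 c t : 0 < c -> 0 < t -> (1 + c * t.-1 + c.-1 = c * t)%N.
Proof. by case: c => // c _; case: t => // t _ /=; rewrite !mulSn !mulnS; lia. Qed.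

Lemma arith2 z t c : 0 < z -> 1 < t -> t <= c.-1 ->
  ((c - 2) * (2 * z) <= z * t.-1)%N -> False.
Proof. move=> z0 t1 tc h; nia. Qed.

Lemma arith3 a b s : 1 < a -> 1 < b -> 0 < s -> s %| a.-1 * b.-1 ->
  (a * b).-1 %| (a * b * s).-1 -> s = 1%N.
Proof.
move=> a1 b1 s0 d1 d2.
have le1 : s <= a.-1 * b.-1 by apply: dvdn_leq => //; rewrite muln_gt0 -!subn1 !subn_gt0 a1 b1.
have e : ((a * b * s).-1 = (a * b).-1 * s + s.-1)%N.
  clear d1 d2 le1; case: s s0 => // s _; case: a a1 => // a _; case: b b1 => // b _ /=.
  lia.
rewrite e in d2; have d3 : (a * b).-1 %| s.-1 by rewrite (dvdn_addr _ (dvdn_mulr s (dvdnn _))) in d2.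
case: s s0 le1 d3 {d1 d2 e} => // [[|s]] // _ le1 d3.
have := dvdn_leq (isT : 0 < s.+1) d3; clear d3.
move: le1; case: a a1 => // a _; case: b b1 => // b _ /=; nia.
Qed.

Section Main.
Variable gT : finGroupType.
Variable G : {group gT}.

Definition fib (x : gT) := [set y in G | 'C_G[y] == 'C_G[x]].

Lemma inZ_cent x : x \in G -> (x \in 'Z(G)) = ('C_G[x] == G).
Proof.
move=> xG; apply/idP/eqP.
  move=> xZ; apply/setIidPl; rewrite sub_cent1; exact: (subsetP (subsetIr _ _)) xZ.
move=> eC; rewrite inE xG /= -sub_cent1 -{1}eC; exact: subsetIr.
Qed.

Lemma fib_sub x : x \in G :\: 'Z(G) -> fib x \subset G :\: 'Z(G).
Proof.
case/setDP=> xG xZ; apply/subsetP=> y; rewrite inE => /andP[yG /eqP e].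
rewrite inE yG andbT inZ_cent // e -inZ_cent //.
Qed.

Lemma fib_self x : x \in G -> x \in fib x.
Proof. by move=> xG; rewrite inE xG eqxx. Qed.

Lemma deg_fib x : x \in G :\: 'Z(G) ->
  induced_nc_deg G x = #|G :\: 'Z(G)| - #|fib x|.
Proof.
move=> xGZ; rewrite /induced_nc_deg.
have -> : [set y in G :\: 'Z(G) | nc_adj G x y] = (G :\: 'Z(G)) :\: fib x.
  apply/setP=> y; rewrite !inE /nc_adj.
  case: (eqVneq x y) => [->|_]; rewrite ?eqxx ?andbF ?andFb //=.
    by case: (y \in G).
  rewrite [_ == 'C_G[x]]eq_sym.
  by case: (y \in G); case: (y \in 'C(G)); case: eqP.
by rewrite cardsD (setIidPr (fib_sub xGZ)).
Qed.


Definition maxc (w : gT) := (w \in G :\: 'Z(G)) &&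
  [forall y in G :\: 'Z(G), ('C_G[w] \subset 'C_G[y]) ==> ('C_G[y] \subset 'C_G[w])].

Lemma maxcP w y : maxc w -> y \in G :\: 'Z(G) -> 'C_G[w] \subset 'C_G[y] ->
  'C_G[y] = 'C_G[w].
Proof.
case/andP=> _ /forall_inP H yGZ sub; apply/eqP; rewrite eqEsubset sub andbT.
exact: (implyP (H y yGZ)).
Qed.

Lemma maxc_GZ w : maxc w -> w \in G :\: 'Z(G).
Proof. by case/andP. Qed.

Lemma exists_max x : x \in G :\: 'Z(G) ->
  exists2 w, maxc w & 'C_G[x] \subset 'C_G[w].
Proof.
move=> xGZ.
pose S := [set y in G :\: 'Z(G) | 'C_G[x] \subset 'C_G[y]].
have xS : x \in S by rewrite inE xGZ subxx.
case: (@arg_maxnP _ x (mem S) (fun y => #|'C_G[y]|) xS) => w wS Hmax.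
have /setIdP[wGZ sxw] : w \in S := wS.
exists w => //; rewrite /maxc wGZ; apply/forall_inP=> y yGZ; apply/implyP=> swy.
have yS : y \in S by rewrite inE yGZ (subset_trans sxw swy).
have le := Hmax y yS.
have -> : 'C_G[y] = 'C_G[w]; last exact: subxx.
by apply/esym/eqP; rewrite eqEcard swy; exact: le.
Qed.

Lemma cent_sub y x : y \in G -> x \in G ->
  ('C_G[x] \subset 'C_G[y]) = (y \in 'Z('C_G[x])).
Proof.
move=> yG xG; apply/idP/idP.
  move=> sub; rewrite inE; apply/andP; split.
    have : x \in 'C_G[y] by apply: (subsetP sub); rewrite inE xG cent1id.
    by case/subcent1P=> _ cxy; apply/subcent1P; split.
  by rewrite -sub_cent1; apply: subset_trans sub (subsetIr _ _).
case/setIP=> _ yC; rewrite subsetI subsetIl /= sub_cent1 //.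
Qed.


Lemma fib_max w : maxc w -> fib w = 'Z('C_G[w]) :\: 'Z(G).
Proof.
move=> mw; have /setDP[wG wZ] := maxc_GZ mw.
apply/setP=> y; apply/idP/idP.
  move=> yf; have /setDP[yG yZ] := subsetP (fib_sub (maxc_GZ mw)) y yf.
  move: yf; rewrite inE yG /= => /eqP e.
  by rewrite inE yZ /= -cent_sub // e subxx.
case/setDP=> yZC yZ.
have yG : y \in G by have /setIP[/setIP[]] := yZC.
rewrite inE yG /=; apply/eqP; apply: maxcP mw _ _; first by rewrite inE yZ yG.
by rewrite cent_sub.
Qed.

Lemma Z_sub_ZC x : x \in G -> 'Z(G) \subset 'Z('C_G[x]).
Proof.
move=> xG; apply/subsetP=> z zZ.
have zG : z \in G by have /setIP[] := zZ.
rewrite -cent_sub //; move: zZ; rewrite inZ_cent // => /eqP ->; exact: subsetIl.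
Qed.

Lemma cent_mulZ u y : u \in 'Z(G) -> y \in G -> 'C_G[u * y] = 'C_G[y].
Proof.
move=> uZ yG; have uG : u \in G by have /setIP[] := uZ.
have cu : forall g, g \in G -> commute g u.
  move=> g gG; move/centerP: uZ => [_ H]; exact/esym/H.
apply/setP=> g; apply/idP/idP; case/subcent1P=> gG cg; apply/subcent1P; split => //.
  apply: commute_sym.
  by have := commuteM (commuteV (cu g gG)) (commute_sym cg); rewrite mulKg.
apply: commute_sym; exact: commuteM (cu g gG) (commute_sym cg).
Qed.

Lemma centX_sub y e : 'C_G[y] \subset 'C_G[y ^+ e].
Proof.
apply/subsetP=> g /subcent1P[gG cg]; apply/subcent1P; split => //.
exact/commute_sym/commuteX/commute_sym.
Qed.

Lemma cent_coprime_l x a m n : x \in G -> a \in G -> commute x a ->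
  coprime m n -> x ^+ m \in 'Z(G) -> a ^+ n \in 'Z(G) ->
  'C_G[x * a] \subset 'C_G[a].
Proof.
move=> xG aG cxa cop xm an.
case aZ: (a \in 'Z(G)).
  by move: aZ; rewrite inZ_cent // => /eqP ->; exact: subsetIl.
case: n cop an => [|[|n]] cop an.
- move: cop; rewrite /coprime gcdn0 => /eqP m1.
  move: xm; rewrite m1 expg1 => xZ.
  rewrite cent_mulZ //.
- by rewrite expg1 aZ in an.
pose e := chinese m n.+2 0 1.
have em : (e %% m = 0)%N.
  by have := chinese_modl cop 0%N 1%N; rewrite -/e mod0n.
have en : (e %% n.+2 = 1)%N.
  by have := chinese_modr cop 0%N 1%N; rewrite -/e (@modn_small 1%N).
have xe : x ^+ e \in 'Z(G).
  by rewrite (divn_eq e m) em addn0 mulnC expgM groupX.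
have ae : a ^+ e = (a ^+ n.+2) ^+ (e %/ n.+2) * a.
  by rewrite {1}(divn_eq e n.+2) en expgD expg1 mulnC expgM.
set u := x ^+ e * (a ^+ n.+2) ^+ (e %/ n.+2).
have uZ : u \in 'Z(G) by rewrite groupM // groupX.
have : (x * a) ^+ e = u * a by rewrite expgMn // ae /u mulgA.
move=> h; rewrite -(cent_mulZ uZ aG) -h; exact: centX_sub.
Qed.

Lemma cent_coprime x a m n : x \in G -> a \in G -> commute x a ->
  coprime m n -> x ^+ m \in 'Z(G) -> a ^+ n \in 'Z(G) ->
  'C_G[x * a] = 'C_G[x] :&: 'C_G[a].
Proof.
move=> xG aG cxa cop xm an; apply/eqP; rewrite eqEsubset; apply/andP; split.
  rewrite subsetI (cent_coprime_l xG aG cxa cop xm an) andbT.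
  rewrite cxa; apply: (cent_coprime_l aG xG (commute_sym cxa) _ an xm).
  by rewrite coprime_sym.
apply/subsetP=> g /setIP[/subcent1P[gG c1] /subcent1P[_ c2]].
apply/subcent1P; split => //; exact/commute_sym/commuteM; apply: commute_sym.
Qed.


Lemma count_fibs (S : {set gT}) k :
  {in S, forall y, #|[set z in S | 'C_G[z] == 'C_G[y]]| = k} ->
  #|S| = (#|[set 'C_G[y] | y in S]| * k)%N.
Proof.
move=> H; rewrite -sum1_card (partition_big_imset (fun y => 'C_G[y])) /=.
rewrite -sum_nat_const; apply: eq_bigr => c /imsetP[y yS ->].
rewrite -(H y yS) -sum1_card; apply: eq_bigl => z; by rewrite inE.
Qed.

Lemma fibS (S : {set gT}) y : S \subset G -> fib y \subset S ->
  [set z in S | 'C_G[z] == 'C_G[y]] = fib y.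
Proof.
move=> SG sub; apply/setP=> z; rewrite !inE.
apply/andP/andP => [[zS e]|[zG e]]; split => //.
  exact: (subsetP SG).
by apply: (subsetP sub); rewrite inE zG.
Qed.


Lemma GN : G \subset 'N('Z(G)).
Proof. exact: normal_norm (center_normal G). Qed.

Lemma inN y : y \in G -> y \in 'N('Z(G)).
Proof. exact: subsetP GN y. Qed.

Lemma cosetZ1 y : y \in G -> (coset 'Z(G) y == 1) = (y \in 'Z(G)).
Proof.
move=> yG; apply/eqP/idP; first exact: coset_idr (inN yG).
exact: coset_id.
Qed.

Lemma cosetZX y n : y \in G -> coset 'Z(G) (y ^+ n) = coset 'Z(G) y ^+ n.
Proof. by move=> yG; rewrite morphX // inN. Qed.

Lemma expZ_card (H : {group gT}) a : H \subset G -> a \in H ->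
  a ^+ #|H / 'Z(G)| \in 'Z(G).
Proof.
move=> HG aH; have aG := subsetP HG a aH.
rewrite -cosetZ1 ?groupX // cosetZX //; apply/eqP; apply: expg_cardG.
exact: mem_quotient.
Qed.

Lemma cauchy_lift (H : {group gT}) q : H \subset G -> prime q ->
  q %| #|H / 'Z(G)| -> exists2 x, x \in H :\: 'Z(G) & x ^+ q \in 'Z(G).
Proof.
move=> HG pq dq; have [xb xbH oxb] := Cauchy pq dq.
move: oxb; case/morphimP: xbH => x xN xH -> oxb.
have xG := subsetP HG x xH.
change (#[coset 'Z(G) x] = q) in oxb.
exists x.
  rewrite inE xH andbT -cosetZ1 //; apply/eqP=> e.
  by move: oxb; rewrite e order1 => q1; rewrite -q1 in pq.
by rewrite -cosetZ1 ?groupX // cosetZX // -oxb expg_order.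
Qed.


Lemma commZ (H : {set gT}) a y : a \in 'Z(H) -> y \in H -> commute a y.
Proof. by move/centerP=> [_ Hc] yH; exact: Hc. Qed.

Lemma ZC_G w : 'Z('C_G[w]) \subset G.
Proof. by apply: subset_trans (center_sub _) (subsetIl _ _). Qed.

Lemma ZC_N w : 'Z('C_G[w]) \subset 'N('Z(G)).
Proof. exact: subset_trans (ZC_G w) GN. Qed.

Lemma ZC_cent a w : a \in 'Z('C_G[w]) -> w \in G -> 'C_G[w] \subset 'C_G[a].
Proof. by move=> aZ wG; rewrite cent_sub // (subsetP (ZC_G w)). Qed.

Lemma comm_mod (g s : gT) N M : g \in G -> s \in G -> coprime N M ->
  g ^+ N \in 'Z(G) -> s ^+ M \in 'Z(G) -> s ^ g * s^-1 \in 'Z(G) -> commute s g.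
Proof.
move=> gG sG cop gN sM sgZ.
set c := s ^ g * s^-1 in sgZ.
have sg : s ^ g = c * s by rewrite /c mulgKV.
have cG : c \in G by case/setIP: sgZ.
have cc : forall h, h \in G -> commute c h.
  by move=> h hG; move/centerP: sgZ => [_ Hc]; apply: Hc.
have it : forall n, s ^ (g ^+ n) = c ^+ n * s.
  elim=> [|n IH]; first by rewrite expg0 conjg1 expg0 mul1g.
  rewrite expgSr conjgM IH conjMg sg expgS.
  have -> : (c ^+ n) ^ g = c ^+ n.
    by rewrite conjgE (commute_sym (commuteX n (commute_sym (cc g gG)))) mulKg.
  by rewrite mulgA; congr (_ * _); rewrite (commuteX n (commute_refl c)).
have cN : c ^+ N = 1.
  have := it N; rewrite conjgE.
  have -> : (g ^+ N)^-1 * (s * g ^+ N) = s.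
    move/centerP: gN => [_ Hc]; by rewrite -(Hc s sG) mulKg.
  by move=> h; apply: (mulIg s); rewrite mul1g -h.
have cM : c ^+ M = 1.
  have h1 : (s ^+ M) ^ g = s ^+ M.
    move/centerP: sM => [_ Hc]; by rewrite conjgE (Hc g gG) mulKg.
  have h2 : (s ^+ M) ^ g = c ^+ M * s ^+ M.
    rewrite conjXg sg expgMn //; exact: cc sG.
  by move: h2; rewrite h1 => h; apply: (mulIg (s ^+ M)); rewrite mul1g -h.
have oc : #[c] = 1%N.
  apply/eqP; rewrite -dvdn1 -(eqnP cop) dvdn_gcd.
  by rewrite !order_dvdn cN cM eqxx.
have c1 : c = 1 by apply/eqP; rewrite -order_eq1 oc.
by rewrite /commute conjgC sg c1 mul1g.
Qed.


Lemma lift (H : {group gT}) xb : H \subset G -> xb \in H / 'Z(G) ->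
  exists2 x, x \in H & xb = coset 'Z(G) x.
Proof. by move=> HG /morphimP[x _ xH ->]; exists x. Qed.

Lemma cosetJ s g : s \in G -> g \in G ->
  coset 'Z(G) (s ^ g) = coset 'Z(G) s ^ coset 'Z(G) g.
Proof. by move=> sG gG; rewrite morphJ // inN. Qed.

Lemma coset_comm g s : g \in G -> s \in G ->
  commute (coset 'Z(G) s) (coset 'Z(G) g) -> s ^ g * s^-1 \in 'Z(G).
Proof.
move=> gG sG c.
have e : coset 'Z(G) (s ^ g) = coset 'Z(G) s.
  by rewrite cosetJ //; apply/conjg_fixP; rewrite /commg conjgE c mulKg mulVg.
have : s ^ g \in 'Z(G) :* s.
  by apply/rcoset_kercosetP; rewrite ?inN ?groupJ.
by rewrite mem_rcoset.
Qed.


Section Reg.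
Variable k : nat.
Hypothesis Hk : forall x, x \in G :\: 'Z(G) -> #|fib x| = k.

Lemma card_A w : maxc w -> #|'Z('C_G[w])| = (k + #|'Z(G)|)%N.
Proof.
move=> mw; have /setDP[wG _] := maxc_GZ mw.
have := Hk (maxc_GZ mw); rewrite fib_max // cardsD (setIidPr (Z_sub_ZC wG)) => <-.
rewrite subnK //; apply: subset_leq_card; exact: Z_sub_ZC.
Qed.

Definition tq := ((k + #|'Z(G)|) %/ #|'Z(G)|)%N.

Lemma card_Aq w : maxc w -> #|'Z('C_G[w]) / 'Z(G)| = tq.
Proof.
move=> mw; have /setDP[wG _] := maxc_GZ mw.
rewrite /tq -(card_A mw) card_quotient ?ZC_N //.
by rewrite -(Lagrange (Z_sub_ZC wG)) mulKn // cardG_gt0.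
Qed.

Lemma card_A_tt w : maxc w -> #|'Z('C_G[w])| = (#|'Z(G)| * tq)%N.
Proof.
move=> mw; have /setDP[wG _] := maxc_GZ mw.
by rewrite -(card_Aq mw) card_quotient ?ZC_N // Lagrange // Z_sub_ZC.
Qed.

Lemma k_eq w : maxc w -> k = (#|'Z(G)| * tq.-1)%N.
Proof.
move=> mw; have := card_A_tt mw; rewrite card_A //.
case: tq => [|t].
  move/eqP; rewrite muln0 addn_eq0 => /andP[_ /eqP z0].
  by have := cardG_gt0 ('Z(G))%G; rewrite z0.
by rewrite mulnS addnC => /eqP; rewrite eqn_add2l => /eqP.
Qed.

Lemma step1 q : prime q -> q %| #|G / 'Z(G)| -> q %| tq.
Proof.
move=> pq dq; apply/negPn/negP=> ndq.
have cop : coprime q tq by rewrite prime_coprime.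
have [x xGZ xq] := cauchy_lift (subxx G) pq dq.
have /setDP[xG xZ] := xGZ.
have [w mw sxw] := exists_max xGZ.
have /setDP[wG wZ] := maxc_GZ mw.
set A := 'Z('C_G[w]).
have sub : x *: A \subset fib x.
  apply/subsetP=> y; rewrite mem_lcoset => aA.
  set a := x^-1 * y in aA; have -> : y = x * a by rewrite /a mulKVg.
  have aG : a \in G := subsetP (ZC_G w) a aA.
  have cxa : commute x a.
    apply/esym/(commZ aA); apply: (subsetP sxw); by rewrite inE xG cent1id.
  rewrite inE groupM //=; apply/eqP.
  rewrite (cent_coprime xG aG cxa cop xq); last first.
    by rewrite -(card_Aq mw); apply: expZ_card => //; exact: ZC_G.
  apply/setIidPl; apply: subset_trans sxw _; exact: ZC_cent.
have := subset_leq_card sub; rewrite card_lcoset Hk // card_A_tt // (k_eq mw).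
rewrite leq_pmul2l ?cardG_gt0 //.
suff : 0 < tq by case: tq => // n _; rewrite ltnn.
by rewrite -(card_Aq mw) cardG_gt0.
Qed.


Lemma maxc_C x w : x \in G :\: 'Z(G) -> 'C_G[x] = 'C_G[w] -> maxc w -> maxc x.
Proof.
move=> xGZ e /andP[_ /forall_inP H]; rewrite /maxc xGZ e; apply/forall_inP; exact: H.
Qed.

Lemma fib_maxC w b : maxc w -> b \in 'Z('C_G[w]) -> b \notin 'Z(G) ->
  'C_G[b] = 'C_G[w].
Proof.
move=> mw bA bZ; have : b \in fib w by rewrite fib_max // inE bZ.
by rewrite inE => /andP[_ /eqP].
Qed.

Lemma two_cosets w r : maxc w -> prime r -> odd r -> r %| tq ->
  (2 * #|'Z(G)| <= #|[set b in 'Z('C_G[w]) :\: 'Z(G) | b ^+ r \in 'Z(G)]|)%N.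
Proof.
move=> mw pr oddr dr.
have HG := ZC_G w.
have dr' : r %| #|'Z('C_G[w]) / 'Z(G)| by rewrite card_Aq.
have [b /setDP[bA bZ] br] := cauchy_lift HG pr dr'.
have bG := subsetP HG b bA.
have wG : w \in G by have /setDP[] := maxc_GZ mw.
set X := [set b in 'Z('C_G[w]) :\: 'Z(G) | b ^+ r \in 'Z(G)].
have hX : forall e, b ^+ e \notin 'Z(G) -> 'Z(G) :* b ^+ e \subset X.
  move=> e beZ; apply/subsetP=> y; rewrite mem_rcoset => yz.
  have -> : y = (y * (b ^+ e)^-1) * b ^+ e by rewrite mulgKV.
  set z := y * (b ^+ e)^-1 in yz *.
  have zG : z \in G by case/setIP: yz.
  have beG : b ^+ e \in G by rewrite groupX.
  rewrite inE; apply/andP; split; last first.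
    rewrite expgMn; last exact: (commZ yz beG).
    by rewrite -expgM mulnC expgM; apply: groupM; apply: groupX.
  rewrite inE; apply/andP; split.
    by apply: contra beZ => h; rewrite -(mulKg z (b ^+ e)) groupM ?groupV.
  by rewrite groupM ?groupX // (subsetP (Z_sub_ZC wG)).
have b2Z : b ^+ 2 \notin 'Z(G).
  apply: contra bZ => b2.
  have er : r = (1 + r./2 * 2)%N by rewrite muln2 -[in LHS](odd_double_half r) oddr.
  move: br; rewrite er expgD mulnC expgM expg1 => h.
  by rewrite -(mulgK ((b ^+ 2) ^+ r./2) b) groupM // groupV groupX.
have dis : [disjoint 'Z(G) :* b & 'Z(G) :* b ^+ 2].
  rewrite -setI_eq0 -subset0; apply/subsetP=> y /setIP[y1 y2]; exfalso.
  have : b \in 'Z(G) :* b ^+ 2 by rewrite -(@rcoset_transl _ _ y b (b ^+ 2) y1).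
  rewrite mem_rcoset expgS expg1 invMg mulgA mulgV mul1g groupV.
  by apply/negP.
have sU : 'Z(G) :* b :|: 'Z(G) :* b ^+ 2 \subset X.
  by rewrite subUset hX // andbT -{1}(expg1 b) hX // expg1.
have := subset_leq_card sU.
by have := (leq_card_setU ('Z(G) :* b) ('Z(G) :* b ^+ 2)).2; rewrite dis => /eqP ->;
  rewrite !card_rcoset mul2n addnn.
Qed.


Lemma all_max q r : prime q -> prime r -> q != r -> odd r -> q %| tq -> r %| tq ->
  forall x, x \in G :\: 'Z(G) -> maxc x.
Proof.
move=> pq pr nqr oddr dq dr x0' x0GZ'.
apply/negPn/negP => nm'.
set NM := [set y in G :\: 'Z(G) | ~~ maxc y].
have x0'NM : x0' \in NM by rewrite inE x0GZ' nm'.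
case: (@arg_maxnP _ x0' (mem NM) (fun y => #|'C_G[y]|) x0'NM) => x0 x0NM Hmax.
have /setIdP[x0GZ nmx0] : x0 \in NM := x0NM.
have /setDP[x0G x0Z] := x0GZ.
have P0 : forall y, y \in G :\: 'Z(G) -> 'C_G[x0] \subset 'C_G[y] ->
    ('C_G[y] = 'C_G[x0]) \/ maxc y.
  move=> y yGZ sy; case my: (maxc y); [by right | left].
  have yNM : y \in NM by rewrite inE yGZ my.
  apply/esym/eqP; rewrite eqEcard sy; exact: Hmax y yNM.
set D := 'C_G[x0]; set B := 'Z(D).
have BG : B \subset G := ZC_G x0.
have inB : forall y, y \in G -> (y \in B) = (D \subset 'C_G[y]).
  by move=> y yG; rewrite cent_sub.
set Cs := [set 'C_G[y] | y in B :\: 'Z(G)].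
have BZG : B :\: 'Z(G) \subset G :\: 'Z(G) by apply: setSD.
have fibB : forall y, y \in B :\: 'Z(G) -> fib y \subset B :\: 'Z(G).
  move=> y yBZ; have yGZ := subsetP BZG y yBZ.
  have /setDP[yB yZ] := yBZ; have yG := subsetP BG y yB.
  apply/subsetP=> z zf.
  have /setDP[zG zZ] := subsetP (fib_sub yGZ) z zf.
  move: zf; rewrite inE => /andP[_ /eqP e].
  by rewrite inE zZ /= inB // e -inB.
have cnt : #|B :\: 'Z(G)| = (#|Cs| * k)%N.
  apply: count_fibs => y yBZ.
  rewrite fibS ?fibB //; first by apply: Hk; exact: subsetP BZG y yBZ.
  exact: subset_trans BZG (subsetDl _ _).
have [w1 mw1 sDw1] := exists_max x0GZ.
have /setDP[w1G w1Z] := maxc_GZ mw1.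
set M1 := 'C_G[w1].
have A1B : 'Z(M1) \subset B.
  apply/subsetP=> a aA; have aG := subsetP (ZC_G w1) a aA.
  rewrite inB //; exact: subset_trans sDw1 (ZC_cent aA w1G).
have M1Cs : M1 \in Cs.
  apply/imsetP; exists w1 => //; rewrite inE w1Z /=.
  by apply: (subsetP A1B); rewrite -cent_sub.
have DCs : D \in Cs.
  by apply/imsetP; exists x0 => //; rewrite inE x0Z /= inB.
have M1D : M1 != D.
  apply/eqP=> e; move/negP: nmx0; apply; exact: maxc_C x0GZ (esym e) mw1.
have ZB : 'Z(G) \subset B := Z_sub_ZC x0G.
have cardB : #|B| = (#|'Z(G)| + #|Cs| * k)%N.
  by rewrite -cnt cardsD (setIidPr ZB) subnKC // subset_leq_card.
have dvd : #|'Z(M1)| %| #|B| by apply: cardSg.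
rewrite card_A_tt // cardB (k_eq mw1) in dvd.
have Zpos := cardG_gt0 ('Z(G))%G.
have tpos : 0 < tq by rewrite -(card_Aq mw1) cardG_gt0.
have dvd' : tq %| 1 + #|Cs| * tq.-1.
  by rewrite -(dvdn_pmul2l Zpos) mulnDr muln1 mulnCA; exact: dvd.
have c2 : (2 <= #|Cs|)%N.
  have := subset_leq_card (_ : [set M1; D] \subset Cs).
  rewrite cards2 M1D; apply; by rewrite subUset !sub1set M1Cs DCs.
have tm : tq %| #|Cs|.-1.
  have e : (1 + #|Cs| * tq.-1 + #|Cs|.-1 = #|Cs| * tq)%N.
    by apply: arith1 => //; case: (#|Cs|) c2.
  by rewrite -(dvdn_addr _ dvd') e dvdn_mull.
have ge : (tq <= #|Cs|.-1)%N.
  by apply: dvdn_leq => //; case: (#|Cs|) c2 => [|[|c]].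
have dq1 : q %| #|'Z(M1) / 'Z(G)| by rewrite card_Aq.
have [a1 /setDP[a1A a1Z] a1q] := cauchy_lift (ZC_G w1) pq dq1.
have a1G := subsetP (ZC_G w1) a1 a1A.
have Ca1 : 'C_G[a1] = M1 := fib_maxC mw1 a1A a1Z.
set Cs' := Cs :\ D :\ M1.
set U := [set b in B :\: 'Z(G) | ('C_G[b] \in Cs') && (b ^+ r \in 'Z(G))].
have cqr : coprime q r by rewrite prime_coprime // dvdn_prime2.
have sub : a1 *: U \subset fib x0.
  apply/subsetP=> y; rewrite mem_lcoset => bU.
  set b := a1^-1 * y in bU; have -> : y = a1 * b by rewrite /b mulKVg.
  move: bU; rewrite inE => /andP[bBZ /andP[CbCs br]].
  move: CbCs; rewrite !inE => /andP[CbM1 /andP[CbD _]].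
  have /setDP[bB bZ] := bBZ; have bG := subsetP BG b bB.
  have bGZ := subsetP BZG b bBZ.
  have DCb : D \subset 'C_G[b] by rewrite -inB.
  have mb : maxc b by case: (P0 b bGZ DCb) => // e; rewrite e eqxx in CbD.
  have cab : commute a1 b.
    apply: (commZ (subsetP A1B a1 a1A)); exact: (subsetP (center_sub D)).
  have e := cent_coprime a1G bG cab cqr a1q br.
  rewrite Ca1 in e.
  have abG : a1 * b \in G by rewrite groupM.
  have abZ : a1 * b \notin 'Z(G).
    apply: contra w1Z => h; rewrite inZ_cent //; rewrite inZ_cent // e in h.
    rewrite eqEsubset subsetIl /=; apply: subset_trans (subsetIl _ 'C_G[b]).
    by rewrite (eqP h).
  have abGZ : a1 * b \in G :\: 'Z(G) by rewrite inE abZ abG.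
  have DCab : D \subset 'C_G[a1 * b] by rewrite e subsetI sDw1 DCb.
  rewrite abG /=; case: (P0 _ abGZ DCab) => [-> // | mab].
  have s1 : 'C_G[a1 * b] \subset 'C_G[w1] by rewrite e subsetIl.
  have h := maxcP mab (maxc_GZ mw1) s1.
  have M1b : M1 \subset 'C_G[b] by rewrite /M1 h e subsetIr.
  by have := maxcP mw1 bGZ M1b; move/eqP; rewrite (negbTE CbM1).
have lowU : (#|Cs'| * (2 * #|'Z(G)|) <= #|U|)%N.
  rewrite -[#|U|]sum1_card (partition_big (fun b => 'C_G[b]) (mem Cs')); last first.
    by move=> b; rewrite inE => /andP[_ /andP[]].
  rewrite -sum_nat_const; apply: leq_sum => c cCs'.
  have /imsetP[y yBZ ec] : c \in Cs by move: cCs'; rewrite !inE => /andP[_ /andP[]].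
  subst c.
  have yGZ := subsetP BZG y yBZ; have /setDP[yB yZ] := yBZ.
  have yG := subsetP BG y yB.
  have my : maxc y.
    case: (P0 y yGZ _) => [| e | //]; first by rewrite -inB.
    by move: cCs'; rewrite e !inE eqxx andbF.
  apply: leq_trans (two_cosets my pr oddr dr) _.
  rewrite sum1dep_card; apply: subset_leq_card; apply/subsetP=> b.
  case/setIdP => /setDP[bA bZ] brZ.
  have bG := subsetP (ZC_G y) b bA.
  have Cb := fib_maxC my bA bZ.
  rewrite in_set Cb eqxx andbT /U in_set brZ Cb cCs' andbT /=.
  by rewrite andbT in_setD bZ /= inB // Cb -inB.
have cardCs' : #|Cs'| = (#|Cs| - 2)%N.
  rewrite [in RHS](cardsD1 D) DCs [in RHS](cardsD1 M1) in_setD1 M1D M1Cs /=.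
  by rewrite addnA addnC addnK.
have := subset_leq_card sub; rewrite card_lcoset Hk // => hU.
have := leq_trans lowU hU; rewrite cardCs'.
rewrite (k_eq mw1) => h.
have t2 : (1 < tq)%N.
  rewrite ltn_neqAle tpos andbT; apply/eqP=> t1; rewrite -t1 in dq.
  by move: dq; rewrite dvdn1 => /eqP q1; rewrite q1 in pq.
exact: arith2 Zpos t2 ge h.
Qed.


Lemma all_abelian q r : prime q -> prime r -> q != r -> q %| tq -> r %| tq ->
  (forall x, x \in G :\: 'Z(G) -> maxc x) ->
  forall w, w \in G :\: 'Z(G) -> 'C_G[w] \subset 'Z('C_G[w]).
Proof.
move=> pq pr nqr dq dr allm w wGZ; have mw := allm w wGZ.
have /setDP[wG wZ] := wGZ.
apply/subsetP=> y yC; have yG : y \in G by case/setIP: yC.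
case yZ: (y \in 'Z(G)); first exact: (subsetP (Z_sub_ZC wG)).
have yGZ : y \in G :\: 'Z(G) by rewrite inE yZ yG.
have my := allm y yGZ.
suff e : 'C_G[y] = 'C_G[w].
  have : y \in fib w by rewrite inE yG e eqxx.
  by rewrite fib_max // => /setDP[].
have /setDP[yG' _] := yGZ.
have dq1 : q %| #|'Z('C_G[w]) / 'Z(G)| by rewrite card_Aq.
have [a /setDP[aA aZ] aq] := cauchy_lift (ZC_G w) pq dq1.
have dr1 : r %| #|'Z('C_G[y]) / 'Z(G)| by rewrite card_Aq.
have [b /setDP[bA bZ] br] := cauchy_lift (ZC_G y) pr dr1.
have aG := subsetP (ZC_G w) a aA; have bG := subsetP (ZC_G y) b bA.
have aCy : a \in 'C_G[y].
  by apply/subcent1P; split => //; apply/esym; apply: commZ aA yC.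
have cab : commute a b by apply/esym; apply: commZ bA aCy.
have cqr : coprime q r by rewrite prime_coprime // dvdn_prime2.
have e := cent_coprime aG bG cab cqr aq br.
rewrite (fib_maxC mw aA aZ) (fib_maxC my bA bZ) in e.
have abG : a * b \in G by rewrite groupM.
have abZ : a * b \notin 'Z(G).
  apply: contra wZ => h; rewrite inZ_cent //; rewrite inZ_cent // e in h.
  rewrite eqEsubset subsetIl /=; apply: subset_trans (subsetIl _ 'C_G[y]).
  by rewrite (eqP h).
have abGZ : a * b \in G :\: 'Z(G) by rewrite inE abZ abG.
have s1 : 'C_G[a * b] \subset 'C_G[w] by rewrite e subsetIl.
have h := maxcP (allm _ abGZ) wGZ s1.
have s2 : 'C_G[w] \subset 'C_G[y] by rewrite h e subsetIr.
exact: maxcP mw yGZ s2.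
Qed.


Lemma sylow_bound p (pi : nat_pred) : p \notin pi ->
  (forall w, w \in G :\: 'Z(G) -> maxc w /\ 'C_G[w] \subset 'Z('C_G[w])) ->
  (#|G / 'Z(G)|`_p %| tq`_p * (tq`_pi).-1)%N.
Proof.
move=> ppi Hyp.
have [P sylP] := Sylow_exists p (G / 'Z(G)).
have PG := pHall_sub sylP; have pP := pHall_pgroup sylP.
rewrite -(card_Hall sylP).
have [P1 | ntP] := eqsVneq P 1.
  by rewrite P1 cards1 dvd1n.
have ntZ : 'Z(P) != 1 by rewrite (center_nil_eq1 (pgroup_nil pP)).
have [zb zbZ ntzb] := trivgPn _ ntZ.
have zbP : zb \in P by case/setIP: zbZ.
have [z zG ezb] := lift (subxx G) (subsetP PG zb zbP).
have zZ : z \notin 'Z(G) by rewrite -cosetZ1 // -ezb.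
have zGZ : z \in G :\: 'Z(G) by rewrite inE zZ zG.
have [mz Cab] := Hyp z zGZ.
set A := 'C_G[z].
have ZA : 'Z(A) = A by apply/eqP; rewrite eqEsubset center_sub Cab.
have AG : A \subset G := subsetIl _ _.
have abA : abelian A by rewrite /abelian; apply: subset_trans Cab (subsetIr _ _).
have cardAb : #|A / 'Z(G)| = tq by rewrite -(card_Aq mz) -/A ZA.
set Ab := (A / 'Z(G))%G.
have abAb : abelian Ab := quotient_abelian _ abA.
have hallH := nilpotent_pcore_Hall pi (abelian_nil abAb).
set HH := 'O_pi(Ab).
have cardH : #|HH| = (tq`_pi)%N by rewrite (card_Hall hallH) cardAb.
set S := HH :\ 1.
have cardS : #|S| = ((tq`_pi).-1)%N by rewrite -cardH (cardsD1 1 HH) group1.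
have key1 : forall gb sb, gb \in P -> sb \in Ab -> sb ^ gb \in Ab.
  move=> gb sb gbP sbA.
  have [g gG egb] := lift (subxx G) (subsetP PG gb gbP).
  have [s sA esb] := lift AG sbA.
  have sG := subsetP AG s sA.
  have czg : commute (coset 'Z(G) z) (coset 'Z(G) g).
    rewrite -ezb -egb; apply: commute_sym; move/centerP: zbZ => [_ Hc].
    by apply/esym/Hc.
  have u := coset_comm gG zG czg.
  have sgA : s ^ g \in A.
    have -> : A = 'C_G[z ^ g * z^-1 * z] by rewrite cent_mulZ.
    rewrite mulgKV; apply/subcent1P; split; first by rewrite groupJ.
    have /subcent1P[_ czs] := sA.
    by rewrite /commute -!conjMg czs.
  by rewrite esb egb -cosetJ //; apply: mem_quotient.
have key2 : forall gb sb, gb \in P -> sb \in S -> sb ^ gb \in S.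
  move=> gb sb gbP; rewrite !inE conjg_eq1 => /andP[-> sbH] /=.
  have sbA : sb \in Ab by apply: (subsetP (pcore_sub pi Ab)).
  have sgA := key1 gb sb gbP sbA.
  rewrite (mem_normal_Hall hallH (pcore_normal _ _) sgA) /p_elt orderJ.
  by rewrite -/(p_elt pi sb) -(mem_normal_Hall hallH (pcore_normal _ _) sbA).
have actsS : [acts P, on S | 'J].
  apply/actsP=> gb gbP sb /=; apply/idP/idP; last exact: key2.
  move=> h; have := key2 _ _ (groupVr gbP) h; by rewrite conjgK.
have key3 : forall sb, sb \in S -> 'C_P[sb] = P :&: Ab.
  move=> sb; rewrite !inE => /andP[ntsb sbH].
  have sbA : sb \in Ab by apply: (subsetP (pcore_sub pi Ab)).
  apply/eqP; rewrite eqEsubset; apply/andP; split; last first.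
    apply/subsetP=> gb /setIP[gbP gbA]; apply/subcent1P; split => //.
    exact: (centsP abAb).  
  apply/subsetP=> gb /subcent1P[gbP cg]; rewrite inE gbP /=.
  have [g gG egb] := lift (subxx G) (subsetP PG gb gbP).
  have [s sA esb] := lift AG sbA.
  have sG := subsetP AG s sA.
  have gN : g ^+ #[gb] \in 'Z(G).
    by rewrite -cosetZ1 ?groupX // cosetZX // -egb expg_order.
  have sM : s ^+ #[sb] \in 'Z(G).
    by rewrite -cosetZ1 ?groupX // cosetZX // -esb expg_order.
  have Mpi : pi.-nat #[sb] := mem_p_elt (pcore_pgroup pi Ab) sbH.
  have Np : p.-nat #[gb] := mem_p_elt pP gbP.
  have cop : coprime #[gb] #[sb].
    rewrite coprime_sym; apply: (sub_pnat_coprime _ Mpi Np).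
    by move=> x; rewrite !inE => /eqP ->.
  have u := coset_comm gG sG (etrans (congr2 _ (esym esb) (esym egb)) (etrans cg (congr2 _ egb esb))).
  have csg := comm_mod gG sG cop gN sM u.
  have sZ : s \notin 'Z(G) by rewrite -cosetZ1 // -esb.
  have sZA : s \in 'Z(A) by rewrite ZA.
  have gA : g \in A.
    rewrite /A -(fib_maxC mz sZA sZ); apply/subcent1P; split => //.
  by rewrite egb mem_quotient.
have dvdS : #|P : P :&: Ab| %| #|S|.
  rewrite -(acts_sum_card_orbit actsS); apply: dvdn_sum => T /imsetP[sb sbS ->].
  by rewrite card_orbit astab1J key3.
have pPA : p.-group (P :&: Ab) := pgroupS (subsetIl _ _) pP.
have tpos : 0 < tq by rewrite -cardAb cardG_gt0.
have dA : #|P :&: Ab| %| tq`_p.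
  rewrite -(part_pnat_id pPA); apply: partn_dvd => //.
  by rewrite -cardAb; apply: cardSg; exact: subsetIr.
by rewrite -(Lagrange (subsetIl P Ab)) -cardS; exact: dvdn_mul.
Qed.


Lemma count_G w : maxc w -> (tq.-1 %| (#|G / 'Z(G)|).-1)%N.
Proof.
move=> mw.
have cnt : #|G :\: 'Z(G)| = (#|[set 'C_G[y] | y in G :\: 'Z(G)]| * k)%N.
  apply: count_fibs => y yGZ; rewrite fibS ?fib_sub ?Hk //; exact: subsetDl.
have Zpos := cardG_gt0 ('Z(G))%G.
have cG : #|G| = (#|'Z(G)| * #|G / 'Z(G)|)%N.
  by rewrite card_quotient ?GN // Lagrange // center_sub.
rewrite cardsD (setIidPr (center_sub G)) cG (k_eq mw) in cnt.
have Npos : 0 < #|G / 'Z(G)| := cardG_gt0 _.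
move: cnt; rewrite -{2}(muln1 #|'Z(G)|) -mulnBr subn1 mulnCA => /eqP.
by rewrite eqn_pmul2l // => /eqP ->; apply: dvdn_mull.
Qed.

Lemma final_contra q r w : prime q -> prime r -> q != r -> q %| tq -> r %| tq ->
  maxc w ->
  (forall w, w \in G :\: 'Z(G) -> maxc w /\ 'C_G[w] \subset 'Z('C_G[w])) -> False.
Proof.
move=> pq pr nqr dq dr mw Hyp.
have /setDP[wG wZ] := maxc_GZ mw.
have tpos : 0 < tq by rewrite -(card_Aq mw) cardG_gt0.
have dN : tq %| #|G / 'Z(G)|.
  rewrite -(card_Aq mw); apply: cardSg; apply: quotientS; exact: ZC_G.
have Npos : 0 < #|G / 'Z(G)| := cardG_gt0 _.
set N := #|G / 'Z(G)| in dN Npos *.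
have eN : N = (tq * (N %/ tq))%N by rewrite mulnC divnK.
set s := (N %/ tq)%N in eN.
have spos : 0 < s by move: Npos; rewrite eN muln_gt0 => /andP[].
have qt : 1 < tq`_q by rewrite p_part_gt1 mem_primes pq tpos dq.
have rt : 1 < tq`_q^'.
  have : tq`_r %| tq`_q^'.
    apply: sub_in_partn => x _; rewrite !inE => /eqP ->; by rewrite eq_sym.
  move/dvdn_leq => /(_ (part_gt0 _ _)); apply: leq_trans.
  by rewrite p_part_gt1 mem_primes pr tpos dr.
have et : tq = (tq`_q * tq`_q^')%N by rewrite partnC.
have ds : s %| (tq`_q).-1 * (tq`_q^').-1.
  apply/dvdn_partP => // p _.
  have hNp : forall pi, p \notin pi ->
      (tq`_p * s`_p %| tq`_p * (tq`_pi).-1)%N.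
    by move=> pi ppi; rewrite -partnM // -eN; exact: sylow_bound ppi Hyp.
  case: (eqVneq p q) => [epq | npq].
    subst p.
    have qq : q \notin q^' by rewrite !inE negbK.
    have := hNp q^' qq.
    rewrite dvdn_pmul2l ?part_gt0 // => h.
    exact: dvdn_trans h (dvdn_mull _ (dvdnn _)).
  have pq' : p \notin (q : nat_pred) by rewrite !inE npq.
  have := hNp (nat_pred_of_nat q) pq'.
  rewrite dvdn_pmul2l ?part_gt0 // => h.
  exact: dvdn_trans h (dvdn_mulr _ (dvdnn _)).
have s1 : s = 1%N.
  apply: (arith3 qt rt spos ds); rewrite -et -eN; exact: count_G mw.
have cG : #|G| = (#|'Z(G)| * N)%N.
  by rewrite /N card_quotient ?GN // Lagrange // center_sub.
have : #|'Z('C_G[w])| = #|G| by rewrite card_A_tt // cG eN s1 muln1.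
move=> e; have : 'Z('C_G[w]) = G.
  by apply/eqP; rewrite eqEcard ZC_G e leqnn.
move=> e2; have : 'C_G[w] = G.
  apply/eqP; rewrite eqEsubset subsetIl /= -{1}e2; exact: center_sub.
by move/eqP; rewrite -inZ_cent // (negbTE wZ).
Qed.

End Reg.

End Main.

Theorem theorem3p5 (gT : finGroupType) (G : {group gT}) :
  ~~ abelian G -> induced_regular G ->
  exists p : nat, prime p /\ (p.-group (G / 'Z(G)))%g.
Proof.
move=> nab reg.
have [x0 x0GZ] : exists x0, x0 \in G :\: 'Z(G).
  apply/set0Pn; apply: contra nab => e.
  rewrite setD_eq0 in e; rewrite /abelian; apply: subset_trans e _.
  exact: subsetIr.
pose k := #|fib G x0|.
have Hk : forall x, x \in G :\: 'Z(G) -> #|fib G x| = k.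
  move=> x xGZ; have := reg x x0 xGZ x0GZ; rewrite !deg_fib //.
  have l1 := subset_leq_card (fib_sub xGZ); have l2 := subset_leq_card (fib_sub x0GZ).
  rewrite /k; lia.
have [w mw _] := exists_max x0GZ.
have t1 : 1 < tq G k.
  have := k_eq Hk mw; have /setDP[x0G _] := x0GZ.
  have : 0 < k by rewrite /k card_gt0; apply/set0Pn; exists x0; exact: fib_self.
  move=> kpos ek; move: kpos; rewrite {1}ek muln_gt0 => /andP[_].
  by case: (tq G k) => [|[|t]].
set t := tq G k in t1 *.
pose p := pdiv t.
have pp : prime p := pdiv_prime t1.
have dp : p %| t := pdiv_dvd t.
case: (boolP [exists r : 'I_t.+1, prime r && (r %| t) && (nat_of_ord r != p)]).
  case/existsP => r /andP[/andP[pr dr] nrp].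
  have [q' [r' [pq' [pr' [nqr' [oddr' [dq' dr']]]]]]] : exists q' r',
      prime q' /\ prime r' /\ q' != r' /\ odd r' /\ q' %| t /\ r' %| t.
    case oddr: (odd r).
      by exists p, r; do !split => //; rewrite eq_sym.
    have r2 : r = 2 :> nat by case: (even_prime pr) => // h; rewrite h in oddr.
    have oddp : odd p.
      by case: (even_prime pp) => // h; rewrite h r2 eqxx in nrp.
    by exists r, p; do !split => //.
  have allm := all_max Hk pq' pr' nqr' oddr' dq' dr'.
  have allab := all_abelian Hk pq' pr' nqr' dq' dr' allm.
  exfalso; apply: (final_contra Hk pq' pr' nqr' dq' dr' mw) => w' w'GZ.
  by split; [exact: allm | exact: allab].
move=> none; exists p; split => //.
rewrite /pgroup; apply/pnatP; first exact: cardG_gt0.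
move=> d pd dd; have ddt := step1 Hk pd dd.
rewrite inE; apply/negPn/negP => ndp; move/negP: none; apply.
have dlt : d < t.+1 by rewrite ltnS; apply: dvdn_leq; [exact: ltnW | exact: ddt].
by apply/existsP; exists (Ordinal dlt); rewrite /= pd ddt.
Qed.
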